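(* Consider the two-agent technology adoption game. There exists $\varepsilon_0>0$ such that for every $\varepsilon\in(0,\varepsilon_0)$ there is a nonempty open interval $J\subset(0,1)$ of costs such that for every $c\in J$: with the single seed 1 there is an equilibrium in which the probability that both agents adopt is strictly greater than the probability that both adopt in every equilibrium with two seeds.
   Context: Fix $\rho\in(0,1)$, $\varepsilon\in(0,1)$, two agents $1,2$ linked to each other, state $\theta\in\{g,b\}$ with $\Pr(\theta=g)=\rho$; in state $b$ no messages are sent. Every transmission is lost independently with probability $\varepsilon$. Single seed: in state $g$ the planner sends to 1, who, if she receives it, forwards it to 2; each agent observes only whether she received a message. Two seeds: in state $g$ the planner sends to both 1 and 2; an agent who receives the planner's message forwards it to the other agent; an agent does not forward a message she received only from the other agent; each agent observes which of the two sources (planner, other agent) delivered a message to her. Technology adoption game with cost $c\in(0,1)$: each agent chooses $a_i\in\{0,1\}$ (possibly mixed) as a function of her information; payoff $a_i(\mathbf 1[\theta=g\text{ and both adopt}]-c)$; equilibria are Bayesian Nash equilibria. *)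

(* Defs.v *)
From HB Require Import structures.
From mathcomp Require Import all_boot all_order all_algebra.
From mathcomp Require Import Rstruct.
From Stdlib Require Import Rdefinitions.

Set Implicit Arguments.
Unset Strict Implicit.
Unset Printing Implicit Defensive.

Import Order.TTheory GRing.Theory Num.Theory.
Local Open Scope ring_scope.

Notation R := Rdefinitions.R.

(*  good w  : whether the state theta is g at outcome w                 *)
(* A (mixed, behavioural) strategy of agent i is a map S_i -> [0,1]    *)
(* giving the probability of adopting after each signal.               *)

Definition mixed_strategy (S : finType) (s : S -> R) : Prop :=
  forall x, 0 <= s x <= 1.

Definition exp_payoff (Om Si Sj : finType) (prob : Om -> R) (good : Om -> bool)
  (sigi : Om -> Si) (sigj : Om -> Sj) (c : R) (si : Si -> R) (sj : Sj -> R) : R :=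
  \sum_(w : Om) prob w * si (sigi w) * ((if good w then sj (sigj w) else 0) - c).

Definition is_BNE (Om S1 S2 : finType) (prob : Om -> R) (good : Om -> bool)
  (sig1 : Om -> S1) (sig2 : Om -> S2) (c : R) (s1 : S1 -> R) (s2 : S2 -> R) : Prop :=
  [/\ mixed_strategy s1, mixed_strategy s2,
      (forall t1 : S1 -> R, mixed_strategy t1 ->
         exp_payoff prob good sig1 sig2 c t1 s2 <= exp_payoff prob good sig1 sig2 c s1 s2)
    & (forall t2 : S2 -> R, mixed_strategy t2 ->
         exp_payoff prob good sig2 sig1 c t2 s1 <= exp_payoff prob good sig2 sig1 c s2 s1)].

(* Probability that both agents adopt (randomizations independent given signals). *)
Definition prob_both (Om S1 S2 : finType) (prob : Om -> R)
  (sig1 : Om -> S1) (sig2 : Om -> S2) (s1 : S1 -> R) (s2 : S2 -> R) : R :=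
  \sum_(w : Om) prob w * s1 (sig1 w) * s2 (sig2 w).

(* Probability that a given transmission is delivered (true) / lost.   *)
Definition pdeliv (eps : R) (b : bool) : R := if b then 1 - eps else eps.
Definition pstate (rho : R) (g : bool) : R := if g then rho else 1 - rho.

(* Single seed.  Outcome (g, a, f): g = state is good; a = planner->1   *)
(* transmission delivered; f = forward 1->2 delivered.  In state b no   *)
(* message is sent, so a and f are then irrelevant dummies.             *)
Definition Om1 : finType := (bool * bool * bool)%type.
Definition prob1 (rho eps : R) (w : Om1) : R :=
  let: (g, a, f) := w in pstate rho g * pdeliv eps a * pdeliv eps f.
Definition good1 (w : Om1) : bool := w.1.1.
(* agent 1 received a message *)
Definition sig1_1 (w : Om1) : bool := let: (g, a, f) := w in g && a.
(* agent 2 received a message (only via the forward from 1) *)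
Definition sig1_2 (w : Om1) : bool := let: (g, a, f) := w in [&& g, a & f].

(* Two seeds.  Outcome (g, (a1, a2, f12, f21)): a_i = planner->i        *)
(* delivered; f12 = forward 1->2 delivered; f21 = forward 2->1          *)
(* delivered.  An agent forwards only the planner's message.  Signal   *)
(* of agent i = (received from planner, received from the other agent). *)
Definition Om2 : finType := (bool * (bool * bool * bool * bool))%type.
Definition prob2 (rho eps : R) (w : Om2) : R :=
  let: (g, (a1, a2, f12, f21)) := w in
  pstate rho g * pdeliv eps a1 * pdeliv eps a2 * pdeliv eps f12 * pdeliv eps f21.
Definition good2 (w : Om2) : bool := w.1.
Definition sig2_1 (w : Om2) : bool * bool :=
  let: (g, (a1, a2, f12, f21)) := w in (g && a1, [&& g, a2 & f21]).
Definition sig2_2 (w : Om2) : bool * bool :=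
  let: (g, (a1, a2, f12, f21)) := w in (g && a2, [&& g, a1 & f12]).

Definition BNE_single (rho eps c : R) (s1 s2 : bool -> R) : Prop :=
  is_BNE (prob1 rho eps) good1 sig1_1 sig1_2 c s1 s2.
Definition both_single (rho eps : R) (s1 s2 : bool -> R) : R :=
  prob_both (prob1 rho eps) sig1_1 sig1_2 s1 s2.

Definition BNE_two (rho eps c : R) (s1 s2 : bool * bool -> R) : Prop :=
  is_BNE (prob2 rho eps) good2 sig2_1 sig2_2 c s1 s2.
Definition both_two (rho eps : R) (s1 s2 : bool * bool -> R) : R :=
  prob_both (prob2 rho eps) sig2_1 sig2_2 s1 s2.

(* Main.v *)
Require Import Defs.
From HB Require Import structures.
From mathcomp Require Import all_boot all_order all_algebra.
From mathcomp Require Import Rstruct.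
From mathcomp Require Import lra ring.
Import Order.TTheory GRing.Theory Num.Theory.
Local Open Scope ring_scope.

Lemma sum_pair (I J : finType) (F : I * J -> R) :
  \sum_(w : I * J) F w = \sum_i \sum_j F (i, j).
Proof. by rewrite pair_big; apply: eq_bigr => -[]. Qed.

Lemma sum8 (F : bool*bool*bool -> R) : \sum_(w : bool*bool*bool) F w =
  F (true,true,true) + F (true,true,false) + F (true,false,true) + F (true,false,false)
+ F (false,true,true) + F (false,true,false) + F (false,false,true) + F (false,false,false).
Proof. rewrite !sum_pair !big_bool /=. ring. Qed.

Lemma sum32 (F : bool*(bool*bool*bool*bool) -> R) :
  \sum_(w : bool*(bool*bool*bool*bool)) F w =
  \sum_(g : bool) \sum_(a : bool) \sum_(b : bool) \sum_(f : bool) \sum_(h : bool)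
     F (g,(a,b,f,h)).
Proof.
rewrite sum_pair; apply: eq_bigr => g _.
by rewrite !sum_pair.
Qed.


Lemma pdeliv_ge0 (eps : R) (he0 : 0 < eps) (he1 : eps < 1) b : 0 <= pdeliv eps b.
Proof. rewrite /pdeliv; case: b; lra. Qed.
Lemma pstate_ge0 (rho : R) (hr0 : 0 < rho) (hr1 : rho < 1) b : 0 <= pstate rho b.
Proof. rewrite /pstate; case: b; lra. Qed.

Lemma prob2_ge0 (rho eps : R) (hr0 : 0 < rho) (hr1 : rho < 1) (he0 : 0 < eps) (he1 : eps < 1) w : 0 <= prob2 rho eps w.
Proof.
case: w => g [[[a b] f] h]; rewrite /prob2.
repeat apply: mulr_ge0; first [exact: (@pdeliv_ge0 _ he0 he1) | exact: (@pstate_ge0 _ hr0 hr1)].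
Qed.

Lemma pay1 (rho eps c : R) (t : bool -> R) :
  exp_payoff (prob1 rho eps) good1 sig1_1 sig1_2 c t (fun _ => 1) =
  t true * (rho*(1-eps)*(1-c)) + t false * (rho*eps*(1-c) - (1-rho)*c).
Proof. rewrite /exp_payoff sum8 /prob1 /pdeliv /pstate /=. rewrite !RmultE. ring. Qed.

Lemma pay2 (rho eps c : R) (t : bool -> R) :
  exp_payoff (prob1 rho eps) good1 sig1_2 sig1_1 c t (fun _ => 1) =
  t true * (rho*(1-eps)*(1-eps)*(1-c))
  + t false * (rho*eps*(2-eps)*(1-c) - (1-rho)*c).
Proof. rewrite /exp_payoff sum8 /prob1 /pdeliv /pstate /= !RmultE. ring. Qed.

Lemma both1 (rho eps : R) : both_single rho eps (fun _ => 1) (fun _ => 1) = 1.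
Proof. rewrite /both_single /prob_both sum8 /prob1 /pdeliv /pstate /= !RmultE. ring. Qed.

Lemma Kval (rho eps c : R) :
  \sum_(w : Om2) prob2 rho eps w *
     (if sig2_1 w == (false, false) then (if good2 w then 1 else 0) - c else 0)
  = rho*eps*eps*(2-eps)*(1-c) - (1-rho)*c.
Proof. rewrite sum32 !big_bool /prob2 /pdeliv /pstate /= !RmultE. ring. Qed.

Lemma Lval (rho eps : R) :
  \sum_(w : Om2) prob2 rho eps w * (if sig2_1 w == (false, false) then 0 else 1)
  = rho * (1 - eps*eps*(2-eps)).
Proof. rewrite sum32 !big_bool /prob2 /pdeliv /pstate /= !RmultE. ring. Qed.


Theorem mainTheorem11 (rho : R) (hrho0 : 0 < rho) (hrho1 : rho < 1) :
  exists eps0 : R, 0 < eps0 /\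
    forall eps : R, 0 < eps -> eps < 1 -> eps < eps0 ->
      exists lo hi : R, [/\ 0 <= lo, lo < hi, hi <= 1 &
        forall c : R, lo < c -> c < hi ->
          exists s1 s2 : bool -> R,
            BNE_single rho eps c s1 s2 /\
            forall t1 t2 : bool * bool -> R,
              BNE_two rho eps c t1 t2 ->
              both_two rho eps t1 t2 < both_single rho eps s1 s2].
Proof.
exists ((1 - rho) / 2); split; first lra.
move=> eps he0 he1 heps.
have hr : 0 < 1 - rho by lra.
exists (2 * rho * (eps * eps) / (1 - rho)), (rho * eps); split.
- by apply: divr_ge0; nra.
- rewrite ltr_pdivrMr //. have := mulr_gt0 hrho0 he0. nra.
- nra.
move=> c hlo hhi.
rewrite ltr_pdivrMr // in hlo.
have hc0 : 0 < c by nra.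
have hc1 : c < 1 by have := mulr_gt0 hr he0; nra.
exists (fun _ => 1), (fun _ => 1); split.
  split.
  - by move=> x; apply/andP; split; lra.
  - by move=> x; apply/andP; split; lra.
  - move=> t ht; rewrite !pay1 //.
    have /andP[a0 a1] := ht true; have /andP[b0 b1] := ht false.
    have hA : 0 <= rho*(1-eps)*(1-c).
      apply: mulr_ge0; last lra. apply: mulr_ge0; lra.
    have hB : 0 <= rho*eps*(1-c) - (1-rho)*c.
      have := mulr_gt0 hrho0 he0. nra.
    have h1 : 0 <= (1 - t true) * (rho*(1-eps)*(1-c)) by apply: mulr_ge0; lra.
    have h2 : 0 <= (1 - t false) * (rho*eps*(1-c) - (1-rho)*c) by apply: mulr_ge0; lra.
    lra.
  - move=> t ht; rewrite !pay2 //.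
    have /andP[a0 a1] := ht true; have /andP[b0 b1] := ht false.
    have hA : 0 <= rho*(1-eps)*(1-eps)*(1-c).
      apply: mulr_ge0; last lra. apply: mulr_ge0; last lra. apply: mulr_ge0; lra.
    have hB : 0 <= rho*eps*(2-eps)*(1-c) - (1-rho)*c.
      have := mulr_gt0 hrho0 he0.
      have : rho * eps <= rho * eps * (2 - eps).
        rewrite -[X in X <= _]mulr1; apply: ler_wpM2l; first nra. lra.
      have : 0 < 1 - c by nra.
      nra.
    have h1 : 0 <= (1 - t true) * (rho*(1-eps)*(1-eps)*(1-c)) by apply: mulr_ge0; lra.
    have h2 : 0 <= (1 - t false) * (rho*eps*(2-eps)*(1-c) - (1-rho)*c) by apply: mulr_ge0; lra.
    lra.
move=> t1 t2 [ht1 ht2 hd1 _].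
rewrite both1.
pose t1' := fun s => if s == (false, false) then 0 else t1 s.
have ht1' : mixed_strategy t1'.
  move=> s; rewrite /t1'; case: eqP => _; first by apply/andP; split; lra.
  exact: ht1.
have H := hd1 t1' ht1'.
set K := \sum_(w : Om2) prob2 rho eps w *
     (if sig2_1 w == (false, false) then (if good2 w then 1 else 0) - c else 0).
have HK : exp_payoff (prob2 rho eps) good2 sig2_1 sig2_2 c t1 t2
        - exp_payoff (prob2 rho eps) good2 sig2_1 sig2_2 c t1' t2
        <= t1 (false, false) * K.
  rewrite /exp_payoff /K -sumrB mulr_sumr; apply: ler_sum => w _.
  rewrite /t1'; case: eqP => [->|_].
    have hp := @prob2_ge0 _ _ hrho0 hrho1 he0 he1 w.
    have /andP[h0 h1] := ht1 (false, false).
    suff : (if good2 w then t2 (sig2_2 w) else 0) <= (if good2 w then 1 else 0).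
      move=> hle.
      have hpt : 0 <= prob2 rho eps w * t1 (false, false) by apply: mulr_ge0.
      rewrite mulr0 mul0r subr0.
      have hd : 0 <= (if good2 w then 1 else 0) - (if good2 w then t2 (sig2_2 w) else 0) by rewrite subr_ge0.
      have := mulr_ge0 hpt hd.
      nra.
    by case: (good2 w) => //; have /andP[? ?] := ht2 (sig2_2 w); lra.
  by rewrite subrr !mulr0.
have HKv : K = rho*eps*eps*(2-eps)*(1-c) - (1-rho)*c by rewrite /K Kval.
have HKn : K < 0.
  rewrite HKv.
  have hq : 0 <= rho * (eps * eps) by apply: mulr_ge0; nra.
  have h2 : (2 - eps) * (1 - c) <= 2 by nra.
  have h3 : rho * (eps * eps) * ((2 - eps) * (1 - c)) <= rho * (eps * eps) * 2
    by apply: ler_wpM2l.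
  have -> : rho*eps*eps*(2-eps)*(1-c) = rho * (eps * eps) * ((2 - eps) * (1 - c)) by ring.
  lra.
have h00 : t1 (false, false) = 0.
  have /andP[h0 h1] := ht1 (false, false).
  nra.
apply: (le_lt_trans (y := rho * (1 - eps*eps*(2-eps)))).
  rewrite -Lval /both_two /prob_both; apply: ler_sum => w _.
  case: eqP => [->|_]; first by rewrite h00 !(mulr0, mul0r).
  have hp := @prob2_ge0 _ _ hrho0 hrho1 he0 he1 w.
  have /andP[a0 a1] := ht1 (sig2_1 w); have /andP[b0 b1] := ht2 (sig2_2 w).
  rewrite -[X in _ <= X]mulr1 -[X in _ <= X * _]mulr1.
  apply: ler_pM => //; first exact: mulr_ge0.
  by rewrite !mulr1 -[X in _ <= X]mulr1; apply: ler_wpM2l.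
have hq : 0 <= eps * eps * (2 - eps).
  apply: mulr_ge0; [apply: mulr_ge0|]; lra.
have := mulr_ge0 (ltW hrho0) hq.
rewrite mulrBr; lra.
Qed.
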